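(* Let $k=\mathbb{F}_3$, let $O_7(k)$ be the group of $7\times7$ matrices over $k$ orthogonal for the bilinear form $\langle x,y\rangle=x_1y_7+x_2y_6+\dots+x_7y_1$ on $k^7$, and let \[ A=\begin{pmatrix} 0&0&1&0&0&1&0\\ 1&0&0&0&0&0&1\\ 0&1&0&0&0&0&0\\ 0&0&0&0&0&0&0\\ 0&1&0&0&0&0&1\\ 0&0&1&0&1&0&0\\ 0&0&0&0&0&1&0 \end{pmatrix}. \] Then there is no $g\in O_7(k)$ such that $M=g^{-1}Ag$ satisfies $M_{ij}=0$ for all $i\in\{5,6,7\}$ and $j\in\{1,2,3\}$.
   Context: $M_{ij}$ denotes the entry in row $i$ and column $j$. *)

(* Defs.v *)
From mathcomp Require Import all_boot all_algebra.
Set Implicit Arguments. Unset Strict Implicit. Unset Printing Implicit Defensive.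
Import GRing.Theory.
Local Open Scope ring_scope.

Notation k := 'F_3.

(* Gram matrix of <x,y> = x_1 y_7 + x_2 y_6 + ... + x_7 y_1 (0-based: i + j = 6) *)
Definition Jform : 'M[k]_7 := \matrix_(i < 7, j < 7) ((i + j == 6)%N)%:R.

Definition orthogonal7 (g : 'M[k]_7) : Prop := g^T *m Jform *m g = Jform.

Definition Arows : seq (seq nat) :=
  [:: [:: 0; 0; 1; 0; 0; 1; 0];
      [:: 1; 0; 0; 0; 0; 0; 1];
      [:: 0; 1; 0; 0; 0; 0; 0];
      [:: 0; 0; 0; 0; 0; 0; 0];
      [:: 0; 1; 0; 0; 0; 0; 1];
      [:: 0; 0; 1; 0; 1; 0; 0];
      [:: 0; 0; 0; 0; 0; 1; 0]]%N.

Definition Amat : 'M[k]_7 :=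
  \matrix_(i < 7, j < 7) (nth 0%N (nth [::] Arows i) j)%:R.

(* Main.v *)
Require Import Defs.
From mathcomp Require Import all_boot all_algebra.
From mathcomp Require Import zify.
Set Implicit Arguments. Unset Strict Implicit. Unset Printing Implicit Defensive.
Import GRing.Theory.

Definition allvn (n : nat) : seq (seq nat) :=
  iter n (fun acc => [seq x :: s | x <- [:: 0; 1; 2], s <- acc]) [:: [::]].
Definition idx := iota 0 7.
Definition lin (p : nat -> nat -> nat) (v : seq nat) : seq nat :=
  [seq sumn [seq nth 0 v i * p i j | i <- idx] | j <- idx].
Definition dot (l w : seq nat) : nat := sumn [seq nth 0 l j * nth 0 w j | j <- idx].
Definition pJ (i j : nat) : nat := (i + j == 6).
Definition pA (i j : nat) : nat := nth 0 (nth [::] Arows i) j.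
Definition pJA (i j : nat) : nat := nth 0 (nth [::] (rev Arows) i) j.
Lemma pJA_ok : all (fun i => all (fun j =>
  sumn [seq pJ i k * pA k j | k <- idx] == pJA i j) idx) idx.
Proof. by vm_compute. Qed.
Lemma pJJ_ok : all (fun i => all (fun j =>
  sumn [seq pJ i k * pJ k j | k <- idx] == (i == j)) idx) idx.
Proof. by vm_compute. Qed.
Definition cond v w := (dot (lin pJ v) w %% 3 == 0) && (dot (lin pJA v) w %% 3 == 0).
Definition S := filter (fun v => cond v v) (allvn 7).
Definition SL := [seq (v, lin pJ v, lin pJA v) | v <- S].
Definition cond' (x : seq nat * seq nat * seq nat) w :=
  (dot x.1.2 w %% 3 == 0) && (dot x.2 w %% 3 == 0).
Fixpoint m3 (n : nat) : bool :=
  match n with 0 => true | 1 => false | 2 => false | n.+3 => m3 n end.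
Fixpoint zero3 (a b c : nat) (v w u : seq nat) : bool :=
  match v, w, u with
  | x :: v', y :: w', z :: u' =>
      if m3 (x * a + y * b + z * c) then zero3 a b c v' w' u' else false
  | _, _, _ => true end.
Definition dep (v w u : seq nat) := has (fun t =>
   if (nth 0 t 0 + nth 0 t 1 + nth 0 t 2 == 0) then false
   else zero3 (nth 0 t 0) (nth 0 t 1) (nth 0 t 2) v w u) (allvn 3).
Definition check := all (fun x => let N := [seq y <- SL | cond' x y.1.1] in
   all (fun y => all (fun z => if cond' y z.1.1 then dep x.1.1 y.1.1 z.1.1 else true) N) N) SL.
Lemma checkT : check = true. Proof. vm_compute. reflexivity. Qed.

Lemma m3E n : m3 n = (n %% 3 == 0).
Proof.
suff H : forall n, [/\ m3 n = (n %% 3 == 0), m3 n.+1 = (n.+1 %% 3 == 0)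
                     & m3 n.+2 = (n.+2 %% 3 == 0)] by case: (H n).
elim=> [|m [h0 h1 h2]]; first by [].
split=> //; try (rewrite /= -addn3 modnDr; exact: h0).
Qed.

Lemma mem_allvn n s : (s \in allvn n) = (size s == n) && all (fun x => x < 3) s.
Proof.
elim: n s => [|n IH] s.
  by case: s => [|x s]; rewrite /= ?inE.
rewrite /allvn iterS -/(allvn n).
apply/allpairsP/idP.
  move=> [[x t] [/= hx ht ->]]; rewrite /= eqSS.
  move: ht; rewrite IH => /andP [-> ->]; rewrite andbT /=.
  by move: hx; rewrite !inE => /or3P [] /eqP ->.
case: s => [|x s] //= /andP [hs /andP [hx ha]].
exists (x, s); split => //=; last by rewrite IH -eqSS hs ha.
by rewrite !inE; case: x hx => [|[|[|]]].
Qed.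

Lemma zero3P a b c v w u : zero3 a b c v w u ->
  forall i, i < size v -> i < size w -> i < size u ->
  m3 (nth 0 v i * a + nth 0 w i * b + nth 0 u i * c).
Proof.
elim: v w u => [|x v IH] [|y w] [|z u] //= H [|i] //=;
  case: ifP H => // _ H; exact: IH.
Qed.

Local Open Scope ring_scope.

Definition matn (p : nat -> nat -> nat) : 'M['F_3]_7 := \matrix_(i, j) (p i j)%:R.
Definition cv (g : 'M['F_3]_7) (a : 'I_7) : seq nat := [seq val (g (inord i) a) | i <- idx].

Lemma natF (x : 'F_3) : ((val x)%:R : 'F_3) = x.
Proof. exact: natr_Zp. Qed.

Lemma F3lt (x : 'F_3) : (val x < 3)%N.
Proof. exact: ltn_ord x. Qed.

Lemma F3_0 n : (n%:R : 'F_3) = 0 -> (n %% 3 = 0)%N.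
Proof. by move=> h; have := val_Fp_nat (isT : prime 3) n; rewrite h => <-. Qed.

Lemma F3_0' n : (n %% 3 = 0)%N -> (n%:R : 'F_3) = 0.
Proof. by move=> h; rewrite -(Fp_nat_mod (isT : prime 3)) h. Qed.

Lemma sumn_idx (f : nat -> nat) :
  ((sumn [seq f j | j <- idx])%:R : 'F_3) = \sum_(j < 7) (f j)%:R.
Proof. by rewrite sumnE big_map natr_sum -(big_mkord xpredT (fun j => (f j)%:R : 'F_3)). Qed.

Lemma nth_idx (f : nat -> nat) (i : 'I_7) : nth 0%N [seq f j | j <- idx] i = f i.
Proof. by rewrite (nth_map 0%N) ?size_iota // nth_iota. Qed.

Lemma formE p g a b :
  (g^T *m matn p *m g) a b = ((dot (lin p (cv g a)) (cv g b))%:R : 'F_3).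
Proof.
rewrite /dot sumn_idx mxE; apply: eq_bigr => j _.
rewrite !nth_idx natrM sumn_idx natF inord_val; congr (_ * _).
rewrite mxE; apply: eq_bigr => i _; rewrite !mxE natrM nth_idx natF inord_val //.
Qed.

Lemma prodE p q : matn p *m matn q = matn (fun i j => sumn [seq p i k * q k j | k <- idx]).
Proof.
apply/matrixP => i j; rewrite !mxE sumn_idx; apply: eq_bigr => k _.
by rewrite !mxE natrM.
Qed.

Lemma in_idx (i : 'I_7) : (val i \in idx).
Proof. by rewrite mem_iota leq0n add0n ltn_ord. Qed.

Lemma JformE : Jform = matn pJ.
Proof. by apply/matrixP => i j; rewrite !mxE. Qed.

Lemma AmatE : Amat = matn pA.
Proof. by apply/matrixP => i j; rewrite !mxE. Qed.

Lemma JAE : Jform *m Amat = matn pJA.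
Proof.
rewrite JformE AmatE prodE; apply/matrixP => i j; rewrite !mxE.
have /allP H := pJA_ok; have /allP H2 := H i (in_idx i).
by move/eqP: (H2 j (in_idx j)) => ->.
Qed.

Lemma JJE : Jform *m Jform = 1%:M.
Proof.
rewrite JformE prodE; apply/matrixP => i j; rewrite !mxE.
have /allP H := pJJ_ok; have /allP H2 := H i (in_idx i).
by move/eqP: (H2 j (in_idx j)) => ->.
Qed.

Lemma cv_mem g a : cv g a \in allvn 7.
Proof.
rewrite mem_allvn size_map size_iota eqxx andTb.
by apply/allP => x /mapP [i _ ->]; exact: F3lt.
Qed.

(* Indices are 0-based: rows {5,6,7} -> {4,5,6}, columns {1,2,3} -> {0,1,2}. *)
Theorem lemma2p6 :
  ~ exists g : 'M['F_3]_7,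
      orthogonal7 g /\
      (forall (i j : 'I_7), (4 <= i)%N -> (j < 3)%N ->
         (invmx g *m Amat *m g) i j = 0).
Proof.
move=> [g [Hg Hz]].
have H1 : (Jform *m g^T *m Jform) *m g = 1%:M.
  by rewrite -!mulmxA (mulmxA g^T) Hg JJE.
have [gU _] := mulmx1_unit (mulmx1C H1).
have Hinv : invmx g = Jform *m g^T *m Jform.
  by rewrite -[invmx g]mul1mx -H1 -(mulmxA _ g) mulmxV // mulmx1.
set N := g^T *m (Jform *m Amat) *m g.
have HN : forall i j : 'I_7, (4 <= i)%N -> (j < 3)%N -> (Jform *m N) i j = 0.
  move=> i j hi hj; rewrite -(Hz i j hi hj) Hinv /N !mulmxA //.
have N0 : forall a b : 'I_7, (a < 3)%N -> (b < 3)%N -> N a b = 0.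
  move=> a b ha hb.
  rewrite -[N]mul1mx -JJE -mulmxA mxE big1 // => k _.
  case: (boolP (a + k == 6)%N) => hk.
    rewrite HN ?mulr0 //.
    move/eqP: hk; move: ha; clear; move: (val a) (val k) => x y; lia.
  by rewrite (_ : Jform a k = 0) ?mul0r // /Jform mxE (negbTE hk).
have Cd : forall a b : 'I_7, (a < 3)%N -> (b < 3)%N -> cond (cv g a) (cv g b).
  move=> a b ha hb; apply/andP; split; apply/eqP; apply: F3_0; rewrite -formE.
    rewrite -JformE Hg /Jform mxE.
    suff -> : (a + b == 6)%N = false by [].
    by apply/negbTE/eqP; move: ha hb; clear; move: (val a) (val b) => x y; lia.
  by rewrite -JAE -mulmxA mulmxA; exact: N0.
pose a0 : 'I_7 := inord 0; pose a1 : 'I_7 := inord 1; pose a2 : 'I_7 := inord 2.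
have ha0 : (a0 < 3)%N by rewrite inordK.
have ha1 : (a1 < 3)%N by rewrite inordK.
have ha2 : (a2 < 3)%N by rewrite inordK.
set v0 := cv g a0; set v1 := cv g a1; set v2 := cv g a2.
have inSL : forall v, cond v v -> v \in allvn 7 -> (v, lin pJ v, lin pJA v) \in SL.
  by move=> v h1 h2; apply: map_f; rewrite mem_filter h1 h2.
have X0 := inSL v0 (Cd _ _ ha0 ha0) (cv_mem _ _).
have X1 := inSL v1 (Cd _ _ ha1 ha1) (cv_mem _ _).
have X2 := inSL v2 (Cd _ _ ha2 ha2) (cv_mem _ _).
have := checkT => /allP /(_ _ X0).
move=> /allP /(_ (v1, lin pJ v1, lin pJA v1)).
rewrite mem_filter X1 andbT => /(_ (Cd _ _ ha0 ha1)).
move=> /allP /(_ (v2, lin pJ v2, lin pJA v2)).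
rewrite mem_filter X2 andbT => /(_ (Cd _ _ ha0 ha2)).
have -> : cond' (v1, lin pJ v1, lin pJA v1) v2 by exact: (Cd _ _ ha1 ha2).
move=> /hasP [t ht].
move: ht; rewrite mem_allvn.
case: t => [|a [|b [|c [|]]]] // /andP [_ /and4P [la lb lc _]].
case: ifP => // habc Hzero.
pose zc : 'cV['F_3]_7 := \matrix_(k, l) (nth 0%N [:: a; b; c] k)%:R.
have Gz : g *m zc = 0.
  apply/matrixP => i l; rewrite [RHS]mxE ord1.
  have -> : (g *m zc) i 0 =
     (sumn [seq val (g i (inord k)) * nth 0%N [:: a; b; c] k | k <- idx])%:R.
    rewrite sumn_idx mxE; apply: eq_bigr => k _.
    by rewrite mxE natrM natF inord_val.
  apply: F3_0'; apply/eqP; rewrite -m3E.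
  have := zero3P Hzero (i := i); rewrite /v0 /v1 /v2 /cv !size_map !size_iota.
  move=> /(_ (ltn_ord i) (ltn_ord i) (ltn_ord i)); rewrite !nth_idx !inord_val.
  rewrite /idx /= /a0 /a1 /a2 => H; apply: (eq_ind _ m3 H); lia.
have z0 : zc = 0 by rewrite -(mulKmx gU zc) Gz mulmx0.
have E : forall (k : 'I_7), (nth 0%N [:: a; b; c] k %% 3 = 0)%N.
  by move=> k; apply: F3_0; have := congr1 (fun M : 'cV['F_3]_7 => M k 0) z0; rewrite !mxE.
have := E a0; have := E a1; have := E a2.
rewrite /a0 /a1 /a2 !inordK //= !modn_small //.
by move=> hc hb ha; move: habc; rewrite /= ha hb hc.
Qed.
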